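(* Assume the user paths are pairwise edge-disjoint. Let $E^*$ be an $s$-$t$ path maximizing $\Lambda(\cdot,P)$ over all directed $s$-$t$ paths, and let $d$ be its number of edges. If the initial recursion depth satisfies $I\ge\lceil\log d\rceil$, then the Recursive Greedy algorithm (with $F=\Lambda(\cdot,P)$) returns an $s$-$t$ path $E_{\mathbf{f}}$ with $\Lambda(E_{\mathbf{f}},P)\ge\frac{1}{\lceil\log d\rceil+1}\Lambda(E^*,P)$. (Logarithms are base 2.)
   Context: $G=(V,E)$ is a simple directed acyclic graph with capacities $C\in\mathbb{R}_{\ge0}^E$, $s,t\in V$ joined by a directed path, and budget $0<\gamma\le\min_eC(e)$. User paths $P=\{p_1,\dots,p_k\}$ are directed paths (edge sets) with initial values $\lambda_i\ge0$, $\sum_{i:e\in p_i}\lambda_i\le C(e)$. For $A\subseteq E$, $T(A,P)$ is the optimal value of: maximize $\sum_i\tilde\lambda_i$ s.t. $\sum_{i:e\in p_i}\tilde\lambda_i\le C(e)-\gamma\mathbf{1}_{\{e\in A\}}$ for all $e$, $0\le\tilde\lambda_i\le\lambda_i$; $\Lambda(A,P)=\sum_i\lambda_i-T(A,P)$. (For an $s$-$t$ path $E'$, $\Lambda(E',P)$ equals the throughput reduction caused by injecting flow $\gamma$ along $E'$.) Recursive Greedy algorithm for a set function $F:2^E\to\mathbb{R}$, with $F_X(A)=F(A\cup X)-F(X)$: the recursive procedure $RG(u_1,u_2,X,i)$ ($u_1,u_2\in V$, $X\subseteq E$, integer $i\ge0$) lets $S$ be a shortest (fewest edges) directed $u_1$-$u_2$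 path; if none exists it returns ''infeasible''; if $i=0$ it returns $S$; otherwise it sets $best:=S$, $r:=F_X(S)$ and, for every $v\in V$, computes $Q_1=RG(u_1,v,X,i-1)$ and then $Q_2=RG(v,u_2,X\cup Q_1,i-1)$ (skipping $v$ if a call is infeasible), and if $F_X(Q_1\cup Q_2)>r$ sets $r:=F_X(Q_1\cup Q_2)$, $best:=Q_1\cup Q_2$; finally it returns $best$. The algorithm outputs $RG(s,t,\emptyset,I)$. *)

(* Defs.v *)
From HB Require Import structures.
From mathcomp Require Import all_boot all_order all_algebra.
From mathcomp Require Import classical_sets reals.
Set Implicit Arguments. Unset Strict Implicit. Unset Printing Implicit Defensive.
Import Order.TTheory GRing.Theory Num.Theory.
Local Open Scope ring_scope.

Definition adj (V : finType) (E : {set V * V}) : rel V := fun x y => (x, y) \in E.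

Definition edges_of (V : finType) (u : V) (p : seq V) : {set V * V} :=
  [set z in zip (u :: p) p].

(* p is the vertex sequence (after u) of a directed walk from u to w in E.
   (In a DAG every directed walk is a simple directed path.) *)
Definition dwalk (V : finType) (E : {set V * V}) (u w : V) (p : seq V) : bool :=
  path (adj E) u p && (last u p == w).

Definition is_dpath (V : finType) (E : {set V * V}) (u w : V) (Sp : {set V * V}) : Prop :=
  exists p, dwalk E u w p /\ Sp = edges_of u p.

Definition is_shortest_dpath (V : finType) (E : {set V * V}) (u w : V)
    (Sp : {set V * V}) : Prop :=
  exists p, [/\ dwalk E u w p, Sp = edges_of u p &
                forall q, dwalk E u w q -> (size p <= size q)%N].

Definition simple_dag (V : finType) (E : {set V * V}) : Prop :=
  (forall v, (v, v) \notin E) /\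
  (forall v p, path (adj E) v p -> last v p = v -> p = [::]).

Definition shortest_oracle (V : finType) (E : {set V * V})
    (sp : V -> V -> option {set V * V}) : Prop :=
  forall u w, match sp u w with
              | None => ~ exists q, dwalk E u w q
              | Some S0 => is_shortest_dpath E u w S0
              end.

Definition feasible (R : realType) (V : finType) (E : {set V * V})
    (C : V * V -> R) (gamma : R) (k : nat) (P : 'I_k -> {set V * V})
    (lam : 'I_k -> R) (A : {set V * V}) (lt : 'I_k -> R) : Prop :=
  (forall e, e \in E ->
     \sum_(i < k | e \in P i) lt i <= C e - gamma * (e \in A)%:R) /\
  (forall i, 0 <= lt i <= lam i).

(* T(A,P): optimal value of the LP (a supremum, attained since the polytope is
   compact and nonempty). *)
Definition T_val (R : realType) (V : finType) (E : {set V * V})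
    (C : V * V -> R) (gamma : R) (k : nat) (P : 'I_k -> {set V * V})
    (lam : 'I_k -> R) (A : {set V * V}) : R :=
  sup [set x : R | exists lt : 'I_k -> R,
                     feasible E C gamma P lam A lt /\ x = \sum_(i < k) lt i].

Definition Lambda (R : realType) (V : finType) (E : {set V * V})
    (C : V * V -> R) (gamma : R) (k : nat) (P : 'I_k -> {set V * V})
    (lam : 'I_k -> R) (A : {set V * V}) : R :=
  \sum_(i < k) lam i - T_val E C gamma P lam A.

Definition marg (R : realType) (V : finType) (F : {set V * V} -> R)
    (X A : {set V * V}) : R := F (A :|: X) - F X.

(* Recursive Greedy RG(u1,u2,X,i); sp is the shortest-path oracle and ord the
   order in which the vertices v are scanned.  None = "infeasible". *)
Fixpoint RG (R : realType) (V : finType) (sp : V -> V -> option {set V * V})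
    (ord : seq V) (F : {set V * V} -> R) (i : nat) (u1 u2 : V)
    (X : {set V * V}) {struct i} : option {set V * V} :=
  match sp u1 u2 with
  | None => None
  | Some S0 =>
    match i with
    | 0%N => Some S0
    | i'.+1 =>
      let step (acc : {set V * V} * R) (v : V) :=
        match RG sp ord F i' u1 v X with
        | None => acc
        | Some Q1 =>
          match RG sp ord F i' v u2 (X :|: Q1) with
          | None => acc
          | Some Q2 =>
            if acc.2 < marg F X (Q1 :|: Q2)
            then (Q1 :|: Q2, marg F X (Q1 :|: Q2)) else acc
          end
        end in
      Some (foldl step (S0, marg F X S0) ord).1
    end
  end.

(* Main.v *)
Require Import Defs.
From HB Require Import structures.
From mathcomp Require Import all_boot all_order all_algebra.
From mathcomp Require Import classical_sets reals.
From mathcomp Require Import lra zify.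
Import Order.TTheory GRing.Theory Num.Theory.
Local Open Scope ring_scope.

Section Lam.
Variables (R : realType) (V : finType) (E : {set V * V})
    (C : V * V -> R) (gamma : R) (k : nat) (P : 'I_k -> {set V * V})
    (lam : 'I_k -> R).
Hypothesis HC : forall e, e \in E -> gamma <= C e.
Hypothesis Hg : 0 < gamma.
Hypothesis Hlam : forall i, 0 <= lam i.
Hypothesis Hdisj : forall i j, i != j -> [disjoint P i & P j].

Definition mu i (A : {set V * V}) : R :=
  \big[Order.min/lam i]_(e | (e \in P i) && (e \in E)) (C e - gamma * (e \in A)%:R).

Lemma mu_le_lam i A : mu i A <= lam i.
Proof.
rewrite /mu; elim/big_rec: _ => // e y _ Hy.
by rewrite ge_min Hy orbT.
Qed.

Lemma mu_ge0 i A : 0 <= mu i A.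
Proof.
rewrite /mu; elim/big_ind: _ => //.
- by move=> x y hx hy; rewrite le_min hx hy.
- move=> e /andP [_ He]; have := HC _ He.
  by case: (e \in A); rewrite /= ?mulr1 ?mulr0 ?subr0 ?subr_ge0 // => h; exact: le_trans (ltW Hg) h.
Qed.

Lemma mu_U i A B : mu i (A :|: B) = Order.min (mu i A) (mu i B).
Proof.
rewrite /mu; elim/big_rec3: _ => [|e y1 y2 y3 _ ->]; first by rewrite minxx.
have -> : C e - gamma * (e \in A :|: B)%:R =
   Order.min (C e - gamma * (e \in A)%:R) (C e - gamma * (e \in B)%:R).
  rewrite finset.in_setU; case: (e \in A); case: (e \in B);
    rewrite /= ?mulr1 ?mulr0 ?minxx //.
  - by rewrite min_l //; have Hg2 := Hg; lra.
  - by rewrite min_r //; have Hg2 := Hg; lra.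
by rewrite minACA.
Qed.

Lemma T_val_eq A : T_val E C gamma P lam A = \sum_(i < k) mu i A.
Proof.
rewrite /T_val; set S := (X in sup X).
have Hin : S (\sum_(i < k) mu i A).
  exists (fun i => mu i A); split => //; split; last first.
    by move=> i; rewrite mu_ge0 mu_le_lam.
  move=> e He.
  case: (pickP (fun i => e \in P i)) => [i Hi|Hn]; last first.
    rewrite big_pred0 //; have := HC _ He.
    by case: (e \in A); rewrite /= ?mulr1 ?mulr0 ?subr0 ?subr_ge0 // => h; exact: le_trans (ltW Hg) h.
  rewrite (bigD1 i) //= big1 ?addr0; last first.
    move=> j /andP [Hj Hji].
    by rewrite (disjointFr (Hdisj _ _ Hji) Hj) in Hi.
  rewrite /mu (bigD1 e) /=; last by rewrite Hi He.
  by rewrite ge_min lexx.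
have Hub : ubound S (\sum_(i < k) mu i A).
  move=> x [lt [[Hf1 Hf2] ->]]; apply: ler_sum => i _.
  rewrite /mu; elim/big_rec: _ => [|e y /andP [He1 He2] Hy].
    by case/andP: (Hf2 i).
  rewrite le_min Hy andbT; apply: le_trans (Hf1 e He2).
  rewrite (bigD1 i) //= lerDl; apply: sumr_ge0 => j _.
  by case/andP: (Hf2 j).
apply/eqP; rewrite eq_le; apply/andP; split.
  by apply: ge_sup => //; exists (\sum_(i < k) mu i A).
by apply: ub_le_sup => //; exists (\sum_(i < k) mu i A).
Qed.

Lemma Lambda_eq A : Lambda E C gamma P lam A = \sum_(i < k) (lam i - mu i A).
Proof. by rewrite /Lambda T_val_eq sumrB. Qed.

Lemma Lambda_mono A B : Lambda E C gamma P lam A <= Lambda E C gamma P lam (A :|: B).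
Proof.
rewrite !Lambda_eq; apply: ler_sum => i _; rewrite mu_U lerD2l lerN2.
by rewrite ge_min lexx.
Qed.

Lemma min_sub (a b x : R) :
  Order.min a x + Order.min b x <= Order.min (Order.min a b) x + x.
Proof.
rewrite !minElt; repeat case: ltP => ? //=; lra.
Qed.

Lemma Lambda_sub A B X :
  Lambda E C gamma P lam (A :|: B :|: X) + Lambda E C gamma P lam X <=
  Lambda E C gamma P lam (A :|: X) + Lambda E C gamma P lam (B :|: X).
Proof.
rewrite !Lambda_eq -!big_split /=; apply: ler_sum => i _.
rewrite !mu_U; have := min_sub (mu i A) (mu i B) (mu i X); lra.
Qed.

Lemma Lambda0 : 0 <= Lambda E C gamma P lam finset.set0.
Proof.
rewrite Lambda_eq; apply: sumr_ge0 => i _; rewrite subr_ge0; exact: mu_le_lam.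
Qed.

End Lam.

Section Paths.
Variables (V : finType) (E : {set V * V}).

Lemma edges_nil (u : V) : edges_of u [::] = finset.set0.
Proof. by apply/setP => z; rewrite !inE. Qed.

Lemma edges_cons (u a : V) p : edges_of u (a :: p) = (u, a) |: edges_of a p.
Proof. by rewrite /edges_of /= set_cons. Qed.

Lemma edges_cat (u : V) p q :
  edges_of u (p ++ q) = edges_of u p :|: edges_of (last u p) q.
Proof.
elim: p u => [|a p IH] u /=; first by rewrite edges_nil finset.set0U.
by rewrite !edges_cons IH finset.setUA.
Qed.

Lemma dwalk_cat u v w p q :
  dwalk E u v p -> dwalk E v w q -> dwalk E u w (p ++ q).
Proof.
rewrite /dwalk cat_path last_cat => /andP [Hp /eqP ->] /andP [Hq Hl].
by rewrite Hp Hq Hl.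
Qed.

Lemma dpath_cat u v w A B :
  is_dpath E u v A -> is_dpath E v w B -> is_dpath E u w (A :|: B).
Proof.
move=> [p [Hp ->]] [q [Hq ->]]; exists (p ++ q); split.
  exact: dwalk_cat Hp Hq.
by case/andP: Hp => _ /eqP Hl; rewrite edges_cat Hl.
Qed.

Lemma dwalk_split u w p m :
  dwalk E u w p ->
  [/\ dwalk E u (last u (take m p)) (take m p),
      dwalk E (last u (take m p)) w (drop m p) &
      edges_of u p = edges_of u (take m p) :|: edges_of (last u (take m p)) (drop m p)].
Proof.
rewrite /dwalk -{1 2}(cat_take_drop m p) cat_path last_cat.
move=> /andP [/andP [H1 H2] H3]; split => //; first by rewrite H1 eqxx.
  by rewrite H2 H3.
by rewrite -edges_cat cat_take_drop.
Qed.

Lemma dag_uniq u p :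
  simple_dag E -> path (adj E) u p -> uniq (u :: p).
Proof.
move=> [_ Hdag]; elim: p u => [|a p IH] u //= /andP [Hua Hp].
have := IH a Hp => /= ->; rewrite andbT.
apply/negP => Hin.
have Hpath : path (adj E) u (a :: p) by rewrite /= Hua Hp.
move: Hpath; case/path.splitP: Hin => p1 p2; rewrite cat_path => /andP [H1 _].
have := Hdag _ _ H1; rewrite last_rcons => /(_ erefl).
by case: p1 {H1}.
Qed.

Lemma card_edges u p :
  simple_dag E -> path (adj E) u p -> #|edges_of u p| = size p.
Proof.
move=> Hd Hp; rewrite /edges_of cardsE.
have Hu : uniq (zip (u :: p) p) by apply: zip_uniql; exact: dag_uniq Hp.
by rewrite (card_uniqP Hu) size_zip /= minnC /minn ltnSn.
Qed.

End Paths.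

Section RGsec.
Variables (R : realType) (V : finType) (E : {set V * V})
  (sp : V -> V -> option {set V * V}) (ord : seq V) (F : {set V * V} -> R).
Hypothesis Hsp : shortest_oracle E sp.
Hypothesis Hdag : simple_dag E.
Hypothesis Hord : forall v, v \in ord.
Hypothesis Fmono : forall A B, F A <= F (A :|: B).
Hypothesis Fsub : forall A B X, F (A :|: B :|: X) + F X <= F (A :|: X) + F (B :|: X).

Definition stepf i X u1 u2 (acc : {set V * V} * R) (v : V) :=
  match RG sp ord F i u1 v X with
  | None => acc
  | Some Q1 =>
    match RG sp ord F i v u2 (X :|: Q1) with
    | None => acc
    | Some Q2 =>
      if acc.2 < marg F X (Q1 :|: Q2)
      then (Q1 :|: Q2, marg F X (Q1 :|: Q2)) else acc
    end
  end.

Lemma RG_S i u1 u2 X : RG sp ord F i.+1 u1 u2 X =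
  match sp u1 u2 with
  | None => None
  | Some S0 => Some (foldl (stepf i X u1 u2) (S0, marg F X S0) ord).1
  end.
Proof. by []. Qed.

Lemma RG_0 u1 u2 X : RG sp ord F 0 u1 u2 X = sp u1 u2.
Proof. by rewrite /=; case: (sp u1 u2). Qed.

Lemma foldl_inv (T U : Type) (g : T -> U -> T) (Pi : T -> Prop) s a :
  Pi a -> (forall a u, Pi a -> Pi (g a u)) -> Pi (foldl g a s).
Proof. by elim: s a => [|u s IH] a //= Ha Hg; apply: IH => //; apply: Hg. Qed.

Lemma foldl_mono (T : Type) (U : Type) (g : T * R -> U -> T * R) s a :
  (forall a u, a.2 <= (g a u).2) -> a.2 <= (foldl g a s).2.
Proof.
move=> Hg; elim: s a => [|u s IH] a //=; apply: le_trans (Hg a u) (IH _).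
Qed.

Lemma foldl_bound (T : Type) (U : eqType) (g : T * R -> U -> T * R) s a v x :
  (forall a u, a.2 <= (g a u).2) -> (forall a, x <= (g a v).2) ->
  v \in s -> x <= (foldl g a s).2.
Proof.
move=> Hg Hv; elim: s a => [|u s IH] a //=; rewrite inE => /orP [/eqP Evu|Hin].
  by move: (Hv a); rewrite Evu => Hva; apply: le_trans Hva _; exact: foldl_mono.
exact: IH.
Qed.

Lemma stepf_mono i X u1 u2 a v : a.2 <= (stepf i X u1 u2 a v).2.
Proof.
rewrite /stepf; case: RG => [Q1|] //; case: RG => [Q2|] //.
by case: ifP => // /ltW.
Qed.

Lemma stepf_inv i X u1 u2 a v : a.2 = marg F X a.1 ->
  (stepf i X u1 u2 a v).2 = marg F X (stepf i X u1 u2 a v).1.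
Proof.
rewrite /stepf; case: RG => [Q1|] //; case: RG => [Q2|] //.
by case: ifP.
Qed.

Lemma RG_path i : forall u1 u2 X Q, RG sp ord F i u1 u2 X = Some Q -> is_dpath E u1 u2 Q.
Proof.
elim: i => [|i IH] u1 u2 X Q.
  rewrite RG_0 => Hs; have := Hsp u1 u2; rewrite Hs.
  by move=> [p [Hp -> _]]; exists p.
rewrite RG_S; have := Hsp u1 u2; case: (sp u1 u2) => [S0|] // HS0 [<-].
pose Pi := fun a : {set V * V} * R => is_dpath E u1 u2 a.1.
apply: (@foldl_inv _ _ _ Pi).
  by rewrite /Pi /=; case: HS0 => p [Hp -> _]; exists p.
move=> a v Ha; rewrite /Pi /stepf.
case H1: RG => [Q1|] //; case H2: RG => [Q2|] //; case: ifP => // _ /=.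
exact: dpath_cat (IH _ _ _ _ H1) (IH _ _ _ _ H2).
Qed.

Lemma marg_ge0 X A : 0 <= marg F X A.
Proof. by rewrite /marg subr_ge0 finset.setUC. Qed.

Lemma RG_approx i : forall j u1 u2 X p, (j <= i)%N -> dwalk E u1 u2 p ->
  (size p <= 2 ^ j)%N ->
  exists Q, RG sp ord F i u1 u2 X = Some Q /\
    marg F X (edges_of u1 p) <= (j.+1)%:R * marg F X Q.
Proof.
elim: i => [|i IH] j u1 u2 X p.
  rewrite leqn0 => /eqP -> Hw Hs; rewrite RG_0.
  have := Hsp u1 u2; case: (sp u1 u2) => [S0|] HS0; last first.
    by exfalso; apply: HS0; exists p.
  exists S0; split => //; rewrite mul1r.
  case: p Hw Hs => [|w [|w' p]] // Hw _.
    by rewrite edges_nil /marg finset.set0U subrr marg_ge0.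
  case: HS0 => p0 [Hp0 -> Hmin]; have := Hmin _ Hw => /= Hsz.
  case: p0 Hp0 Hsz {Hmin} => [|w0 [|w1 p0]] // Hp0 _.
    move: Hp0 Hw; rewrite /dwalk /= => /eqP <- /andP [Hu /eqP Hw].
    by move: Hu; rewrite Hw /adj (negbTE (Hdag.1 _)).
  move: Hp0 Hw; rewrite /dwalk /= => /andP [_ /eqP ->] /andP [_ /eqP ->].
  by rewrite lexx.
move=> Hji Hw Hs; rewrite RG_S.
have := Hsp u1 u2; case: (sp u1 u2) => [S0|] HS0; last first.
  by exfalso; apply: HS0; exists p.
eexists; split; first by [].
set a0 := (S0, marg F X S0).
have Hinv : (foldl (stepf i X u1 u2) a0 ord).2 =
    marg F X (foldl (stepf i X u1 u2) a0 ord).1.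
  by apply: (@foldl_inv _ _ _ (fun a => a.2 = marg F X a.1)) => // a v; apply: stepf_inv.
rewrite -Hinv.
suff [v [x [Hx Hv]]] : exists v x, marg F X (edges_of u1 p) <= (j.+1)%:R * x /\
    (forall a, x <= (stepf i X u1 u2 a v).2).
  apply: le_trans Hx _; apply: ler_wpM2l => //.
  apply: foldl_bound; [exact: stepf_mono | exact: Hv | exact: Hord].
have stepb : forall v Q1 Q2 a, RG sp ord F i u1 v X = Some Q1 ->
    RG sp ord F i v u2 (X :|: Q1) = Some Q2 ->
    marg F X (Q1 :|: Q2) <= (stepf i X u1 u2 a v).2.
  move=> v Q1 Q2 a H1 H2; rewrite /stepf H1 H2; case: ifP => [_|/negbT] //=.
  by rewrite -leNgt.
have monoQ : forall Q1 Q2, marg F X Q1 <= marg F X (Q1 :|: Q2).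
  move=> Q1 Q2; rewrite /marg lerD2r finset.setUAC; exact: Fmono.
case: j Hji Hs => [|j] Hji Hs.
  have [Q1 [H1 HQ1]] := IH 0%N u1 u2 X p (leq0n i) Hw Hs.
  have Hnil : dwalk E u2 u2 [::] by rewrite /dwalk /= eqxx.
  have [Q2 [H2 _]] := IH 0%N u2 u2 (X :|: Q1) [::] (leq0n i) Hnil (leq0n _).
  exists u2, (marg F X (Q1 :|: Q2)); split; last by move=> a; exact: stepb.
  apply: le_trans HQ1 _; rewrite !mul1r; exact: monoQ.
pose m := minn (size p) (2 ^ j).
have [Hw1 Hw2 He] := @dwalk_split _ _ _ _ _ m Hw.
set v := last u1 (take m p) in Hw1 Hw2 He.
have Hji' : (j <= i)%N by [].
have Hs1 : (size (take m p) <= 2 ^ j)%N.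
  rewrite size_take_min /m; lia.
have Hs2 : (size (drop m p) <= 2 ^ j)%N.
  rewrite size_drop /m; move: Hs; rewrite expnS; lia.
have [Q1 [H1 HQ1]] := IH j u1 v X _ Hji' Hw1 Hs1.
have [Q2 [H2 HQ2]] := IH j v u2 (X :|: Q1) _ Hji' Hw2 Hs2.
exists v, (marg F X (Q1 :|: Q2)); split; last by move=> a; exact: stepb.
move: HQ1 HQ2; rewrite /marg He.
set P1 := edges_of u1 (take m p); set P2 := edges_of v (drop m p).
have E1 : Q2 :|: (X :|: Q1) = (Q1 :|: Q2) :|: X.
  by rewrite finset.setUC -finset.setUA finset.setUC.
have E2 : X :|: Q1 = Q1 :|: X by rewrite finset.setUC.
rewrite E1 E2.
have M1 : F (P2 :|: X) <= F (P2 :|: (Q1 :|: X)).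
  by rewrite -E2 finset.setUA; exact: Fmono.
have M2 : F (Q1 :|: X) <= F ((Q1 :|: Q2) :|: X).
  by rewrite finset.setUAC; exact: Fmono.
have S1 := Fsub P1 P2 X.
set J := (j.+1)%:R; rewrite mulrSr -/J.
have HJ : 0 <= J by rewrite /J ler0n.
move=> HQ1 HQ2; nra.
Qed.

End RGsec.

Theorem theorem1 (R : realType) (V : finType) (E : {set V * V}) (s t : V)
    (C : V * V -> R) (gamma : R) (k : nat) (P : 'I_k -> {set V * V})
    (lam : 'I_k -> R) (sp : V -> V -> option {set V * V}) (ord : seq V)
    (I : nat) (Estar : {set V * V}) :
  simple_dag E ->
  (exists q, dwalk E s t q) ->
  (forall e, e \in E -> 0 <= C e) ->
  0 < gamma ->
  (forall e, e \in E -> gamma <= C e) ->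
  (forall i, exists a b q, dwalk E a b q /\ P i = edges_of a q) ->
  (forall i, 0 <= lam i) ->
  (forall e, e \in E -> \sum_(i < k | e \in P i) lam i <= C e) ->
  (forall i j, i != j -> [disjoint P i & P j]) ->
  shortest_oracle E sp ->
  perm_eq ord (enum V) ->
  is_dpath E s t Estar ->
  (forall Q, is_dpath E s t Q ->
     Lambda E C gamma P lam Q <= Lambda E C gamma P lam Estar) ->
  (up_log 2 #|Estar| <= I)%N ->
  exists Ef,
    RG sp ord (Lambda E C gamma P lam) I s t finset.set0 = Some Ef /\
    is_dpath E s t Ef /\
    Lambda E C gamma P lam Ef >=
      Lambda E C gamma P lam Estar / (up_log 2 #|Estar|).+1%:R.
Proof.
move=> Hdag Hex HC0 Hg HCg Hpaths Hlam Hcap Hdisj Hsp Hperm Hstar Hopt Hlog.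
have Fmono : forall A B, Lambda E C gamma P lam A <= Lambda E C gamma P lam (A :|: B).
  by move=> A B; apply: Lambda_mono.
have Fsub : forall A B X, Lambda E C gamma P lam (A :|: B :|: X) + Lambda E C gamma P lam X <=
    Lambda E C gamma P lam (A :|: X) + Lambda E C gamma P lam (B :|: X).
  by move=> A B X; apply: Lambda_sub.
have F0 : 0 <= Lambda E C gamma P lam finset.set0 by apply: Lambda0.
have Hord : forall v, v \in ord by move=> v; rewrite (perm_mem Hperm) mem_enum.
case: (Hstar) => q [Hq HE].
have Hcard : #|Estar| = size q by rewrite HE; apply: (@card_edges _ _ _ _ Hdag); case/andP: Hq.
have Hsz : (size q <= 2 ^ up_log 2 #|Estar|)%N by rewrite -Hcard; apply: up_logP.
have := @RG_approx R V E sp ord (Lambda E C gamma P lam) Hsp Hdag Hord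
  Fmono Fsub I _ s t finset.set0 q Hlog Hq Hsz. move=> [Ef [HRG Hb]].
exists Ef; split => //; split; first by apply: RG_path HRG.
move: Hb; rewrite -HE /marg !finset.setU0.
set J := (up_log 2 #|Estar|).+1%:R.
have HJ : 1 <= J by rewrite /J ler1n.
rewrite ler_pdivrMr; last by apply: lt_le_trans HJ.
have HJF : 0 <= (J - 1) * Lambda E C gamma P lam finset.set0.
  by apply: mulr_ge0 => //; rewrite subr_ge0.
move=> Hb; nra.
Qed.
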